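(* $\oplus_{tot}\mathsf{P}=\oplus\mathsf{P}$.
   Context: An NPTM is a non-deterministic polynomial-time Turing machine. For an NPTM $M$ and input $x$, $acc_M(x)$ is the number of accepting paths of $M$ on $x$ and $tot_M(x)$ is the number of all computation paths of $M$ on $x$ minus $1$. $\#\mathsf{P}=\{acc_M\}$, $\mathsf{TotP}=\{tot_M\}$ over all NPTMs $M$. $\oplus\mathsf{P}$ is the class of languages $L$ for which there is $f\in\#\mathsf{P}$ with $x\in L\iff f(x)$ is odd. $\oplus_{tot}\mathsf{P}$ is defined identically with $f\in\mathsf{TotP}$. *)

(* Defs.v *)
From mathcomp Require Import all_boot.
Set Implicit Arguments. Unset Strict Implicit. Unset Printing Implicit Defensive.

(* Single-tape nondeterministic Turing machines over the input alphabet {0,1}.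
   Tape symbols: [None] = blank, [Some (inl b)] = input bit b,
   [Some (inr w)] = extra work symbol w : Wk.
   The tape is one-way infinite; a configuration is (state, cells strictly left
   of the head in reverse order, cells from the head rightwards).  Moves:
   [true] = right, [false] = left (a left move at the left end stays). *)
Record NTM := {
  St : finType;
  Wk : finType;
  start : St;
  accepting : {set St};
  delta : St -> option (bool + Wk) -> {set St * option (bool + Wk) * bool}
}.

Definition sym (M : NTM) := option (bool + Wk M).
Definition config (M : NTM) := (St M * seq (sym M) * seq (sym M))%type.

Definition init (M : NTM) (x : seq bool) : config M :=
  (start M, [::], [seq Some (inl b) | b <- x]).

Definition head_sym (M : NTM) (c : config M) : sym M :=
  if c.2 is a :: _ then a else None.

Definition trans (M : NTM) (c : config M) :=
  delta c.1.1 (head_sym c).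

Definition halted (M : NTM) (c : config M) : bool := trans c == set0.

Definition step (M : NTM) (c : config M) (t : St M * sym M * bool) : config M :=
  let: (q', a, mv) := t in
  let: (_, l, r) := c in
  let r' := a :: behead r in
  if mv then (q', a :: l, behead r')
  else match l with
       | [::] => (q', [::], r')
       | b :: l' => (q', l', b :: r')
       end.

Fixpoint halts_within (M : NTM) (n : nat) (c : config M) : bool :=
  if halted c then true else
  match n with
  | 0 => false
  | n'.+1 => [forall t in trans c, halts_within n' (step c t)]
  end.

Fixpoint npaths (M : NTM) (n : nat) (c : config M) : nat :=
  if halted c then 1 else
  match n with
  | 0 => 0
  | n'.+1 => \sum_(t in trans c) npaths n' (step c t)
  end.

Fixpoint naccpaths (M : NTM) (n : nat) (c : config M) : nat :=
  if halted c then (c.1.1 \in accepting M) : nat else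
  match n with
  | 0 => 0
  | n'.+1 => \sum_(t in trans c) naccpaths n' (step c t)
  end.

Definition time_bound (k n : nat) := n ^ k + k.

Definition NPTM_with (M : NTM) (k : nat) :=
  forall x : seq bool, halts_within (time_bound k (size x)) (init M x).

Definition acc_M (M : NTM) (k : nat) (x : seq bool) :=
  naccpaths (time_bound k (size x)) (init M x).
Definition tot_M (M : NTM) (k : nat) (x : seq bool) :=
  npaths (time_bound k (size x)) (init M x) - 1.

Definition SharpP (f : seq bool -> nat) : Prop :=
  exists (M : NTM) (k : nat), NPTM_with M k /\ forall x, f x = acc_M M k x.

Definition TotP (f : seq bool -> nat) : Prop :=
  exists (M : NTM) (k : nat), NPTM_with M k /\ forall x, f x = tot_M M k x.

Definition ParityP (L : seq bool -> Prop) : Prop :=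
  exists f, SharpP f /\ forall x, L x <-> odd (f x).

Definition ParityTotP (L : seq bool -> Prop) : Prop :=
  exists f, TotP f /\ forall x, L x <-> odd (f x).

(* Main.v *)
Require Import Defs.
From mathcomp Require Import all_boot.
Set Implicit Arguments. Unset Strict Implicit. Unset Printing Implicit Defensive.

Section Gen.
Variable M : NTM.

Lemma halted_hw n (c : config M) : halted c -> halts_within n c.
Proof. by case: n => [|n] /= ->. Qed.
Lemma halted_np n (c : config M) : halted c -> npaths n c = 1.
Proof. by case: n => [|n] /= ->. Qed.
Lemma halted_nacc n (c : config M) : halted c -> naccpaths n c = (c.1.1 \in accepting M).
Proof. by case: n => [|n] /= ->. Qed.

Lemma hw_S n (c : config M) : halts_within n.+1 c =
  if halted c then true else [forall t in trans c, halts_within n (step c t)].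
Proof. by []. Qed.
Lemma np_S n (c : config M) : npaths n.+1 c =
  if halted c then 1 else \sum_(t in trans c) npaths n (step c t).
Proof. by []. Qed.
Lemma nacc_S n (c : config M) : naccpaths n.+1 c =
  if halted c then (c.1.1 \in accepting M) : nat else \sum_(t in trans c) naccpaths n (step c t).
Proof. by []. Qed.

Lemma hw_mono n m (c : config M) : n <= m -> halts_within n c -> halts_within m c.
Proof.
elim: n m c => [|n IH] [|m] c //=; case: (halted c) => //= nm.
move/forall_inP=> H; apply/forall_inP=> t Ht; exact: IH (H t Ht).
Qed.

Lemma np_stable n m (c : config M) : n <= m -> halts_within n c -> npaths m c = npaths n c.
Proof.
elim: n m c => [|n IH] [|m] c //=; case: (halted c) => //= nm.
move/forall_inP=> H; apply: eq_bigr => t Ht; exact: IH (H t Ht).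
Qed.

Lemma nacc_stable n m (c : config M) : n <= m -> halts_within n c -> naccpaths m c = naccpaths n c.
Proof.
elim: n m c => [|n IH] [|m] c //=; case: (halted c) => //= nm.
move/forall_inP=> H; apply: eq_bigr => t Ht; exact: IH (H t Ht).
Qed.

Lemma np_pos n (c : config M) : halts_within n c -> 0 < npaths n c.
Proof.
elim: n c => [|n IH] c /=; case Hc: (halted c) => //.
move/forall_inP=> H; move: Hc; rewrite /halted => /set0Pn [t Ht].
by rewrite (bigD1 t) //= ltn_addr // IH // H.
Qed.

Lemma nacc_le n (c : config M) : naccpaths n c <= npaths n c.
Proof.
elim: n c => [|n IH] c /=; case: (halted c) => //; first by case: (_ \in _).
  by case: (_ \in _).
by apply: leq_sum => t _; apply: IH.
Qed.
End Gen.

Section Ext.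
Variable M : NTM.
Variable split : bool.

Notation ESt := (St M + option bool)%type.
Notation ESym := (option (bool + Wk M))%type.
Definition liftT (t : St M * ESym * bool) : ESt * ESym * bool := (inl t.1.1, t.1.2, t.2).
Definition hpair (a : ESym) : {set ESt * ESym * bool} :=
  [set (inr (Some true) : ESt, a, true); (inr (Some false) : ESt, a, true)].
Definition h1 (a : ESym) : ESt * ESym * bool := (inr (Some true), a, true).

Definition ext_delta (s : ESt) (a : ESym) : {set ESt * ESym * bool} :=
  match s with
  | inl q => if delta q a == set0 then
               (if split && (q \notin accepting M) then hpair a else set0)
             else liftT @: delta q a
  | inr None => if delta (start M) a == set0 then
               (if split && (start M \notin accepting M) then set0 else hpair a)
             else h1 a |: (liftT @: delta (start M) a)
  | inr (Some _) => set0
  end.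

Definition ext : NTM := {| St := ESt; Wk := Wk M; start := inr None;
   accepting := setT; delta := ext_delta |}.

Definition liftC (c : config M) : config ext := (inl c.1.1, c.1.2, c.2).
Definition rootC (c : config M) : config ext := (inr None, c.1.2, c.2).

Lemma step_lift (s : ESt) (c : config M) t :
  step ((s, c.1.2, c.2) : config ext) (liftT t) = liftC (step c t).
Proof. by case: c => [[q l] r]; case: t => [[q' a] [|]]; case: l. Qed.

Lemma step_liftC c t : step (liftC c) (liftT t) = liftC (step c t).
Proof. exact: step_lift. Qed.
Lemma step_rootC c t : step (rootC c) (liftT t) = liftC (step c t).
Proof. exact: step_lift. Qed.

Lemma trans_lift c : trans (liftC c) =
  if halted c then (if split && (c.1.1 \notin accepting M) then hpair (head_sym c) else set0)
  else liftT @: trans c.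
Proof. by case: c => [[q l] r]. Qed.

Lemma trans_root c : c.1.1 = start M -> trans (rootC c) =
  if halted c then (if split && (c.1.1 \notin accepting M) then set0 else hpair (head_sym c))
  else h1 (head_sym c) |: (liftT @: trans c).
Proof. by case: c => [[q l] r] /= ->. Qed.

Lemma halted_H b (c : config ext) : c.1.1 = inr (Some b) -> halted c.
Proof. by case: c => [[q l] r] /= ->; rewrite /halted /trans /=. Qed.

Lemma liftT_inj : injective liftT.
Proof. by case=> [[q a] m] [[q' a'] m'] [-> -> ->]. Qed.

End Ext.
Arguments liftT {M}.
Arguments hpair {M}.
Arguments h1 {M}.

Lemma liftA M n (c : config M) : halts_within n c ->
  halts_within n (liftC false c) /\ naccpaths n (liftC false c) = npaths n c.
Proof.
elim: n c => [|n IH] c Hc.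
  have Ht : halted c by move: Hc => /=; case: (halted c).
  have Ht' : halted (liftC false c) by rewrite /halted trans_lift Ht.
  by rewrite halted_hw // halted_nacc // halted_np // inE.
case Ht: (halted c).
  have Ht' : halted (liftC false c) by rewrite /halted trans_lift Ht.
  by rewrite halted_hw // halted_nacc // halted_np // inE.
move: Hc; rewrite hw_S Ht => /forall_inP Hc.
have E : trans (liftC false c) = liftT @: trans c by rewrite trans_lift Ht.
have Ht' : halted (liftC false c) = false by rewrite /halted E imset_eq0 -/(halted c) Ht.
rewrite hw_S nacc_S np_S Ht Ht' E; split.
  apply/forall_inP => t' /imsetP [t Ht0 ->].
  by rewrite step_liftC; case: (IH _ (Hc _ Ht0)).
rewrite big_imset; last by move=> x y _ _; apply: liftT_inj.
by apply: eq_bigr => t Ht0; rewrite step_liftC; case: (IH _ (Hc _ Ht0)).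
Qed.

Lemma step_state M (c : config M) t : (step c t).1.1 = t.1.1.
Proof. by case: c => [[q l] r]; case: t => [[q' a] [|]]; case: l. Qed.

Lemma hpair_halts M b (c : config (ext M b)) a t : t \in hpair a -> halted (step c t).
Proof. by rewrite !inE => /orP [] /eqP ->; apply: halted_H; rewrite step_state. Qed.

Lemma hpair_card M (a : option (bool + Wk M)) : #|hpair a| = 2.
Proof. by rewrite cards2. Qed.

Lemma liftB_halted M n (c : config M) : halted c ->
  halts_within n.+1 (liftC true c) /\ npaths n.+1 (liftC true c) + naccpaths n c = 2 * npaths n c.
Proof.
move=> Ht; case Ha: (c.1.1 \in accepting M).
  have Ht': halted (liftC true c) by rewrite /halted trans_lift Ht /= Ha.
  by rewrite halted_hw // halted_np // halted_nacc // halted_np // Ha.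
have E: trans (liftC true c) = hpair (head_sym c) by rewrite trans_lift Ht /= Ha.
have Ht': halted (liftC true c) = false.
  by rewrite /halted E; apply/negbTE/set0Pn; exists (h1 (head_sym c)); rewrite !inE eqxx.
rewrite hw_S np_S Ht' E halted_nacc // Ha halted_np //; split.
  apply/forall_inP => t Ht0; apply: halted_hw; exact: hpair_halts Ht0.
rewrite (eq_bigr (fun _ => 1)) ?sum1_card ?hpair_card // => t Ht0.
exact: halted_np (hpair_halts _ Ht0).
Qed.

Lemma liftB M n (c : config M) : halts_within n c ->
  halts_within n.+1 (liftC true c) /\ npaths n.+1 (liftC true c) + naccpaths n c = 2 * npaths n c.
Proof.
elim: n c => [|n IH] c Hc.
  by apply: liftB_halted; move: Hc => /=; case: (halted c).
case Ht: (halted c); first exact: liftB_halted.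
move: Hc; rewrite hw_S Ht => /forall_inP Hc.
have E : trans (liftC true c) = liftT @: trans c by rewrite trans_lift Ht.
have Ht' : halted (liftC true c) = false by rewrite /halted E imset_eq0 -/(halted c) Ht.
rewrite hw_S (nacc_S _ c) (np_S _ c) (np_S _ (liftC _ c)) Ht Ht' E; split.
  apply/forall_inP => t' /imsetP [t Ht0 ->].
  by rewrite step_liftC; case: (IH _ (Hc _ Ht0)).
rewrite big_imset; last by move=> x y _ _; apply: liftT_inj.
rewrite -big_split big_distrr.
by apply: eq_bigr => t Ht0; rewrite step_liftC; case: (IH _ (Hc _ Ht0)).
Qed.

Lemma h1_notin M (c : config M) : h1 (head_sym c) \notin [set (@liftT M) x | x in trans c].
Proof. by apply/imsetP => -[t _]; case: t => [[q a'] m] []. Qed.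

Lemma rootA M n (c : config M) : c.1.1 = start M -> halts_within n c ->
  halts_within n.+1 (rootC false c) /\ naccpaths n.+1 (rootC false c) = (npaths n c).+1.
Proof.
move=> Hs Hc; have ER := @trans_root M false c Hs.
case Ht: (halted c).
  rewrite Ht in ER.
  have Ht': halted (rootC false c) = false.
    by rewrite /halted ER; apply/negbTE/set0Pn; exists (h1 (head_sym c)); rewrite !inE eqxx.
  rewrite hw_S nacc_S Ht' ER halted_np //; split.
    apply/forall_inP => t Ht0; apply: halted_hw; exact: hpair_halts Ht0.
  rewrite (eq_bigr (fun _ => 1)) ?sum1_card ?hpair_card // => t Ht0.
  by rewrite halted_nacc ?inE //; exact: hpair_halts Ht0.
case: n Hc => [|n] Hc; first by move: Hc => /=; rewrite Ht.
move: (Hc); rewrite hw_S Ht => /forall_inP Hc'.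
rewrite Ht in ER.
have Ht' : halted (rootC false c) = false.
  by rewrite /halted ER; apply/negbTE/set0Pn; exists (h1 (head_sym c)); rewrite setU11.
rewrite hw_S nacc_S Ht' ER big_setU1 ?h1_notin //; split.
  apply/forall_inP => t /setU1P [-> | /imsetP [t0 Ht0 ->]].
    by apply: halted_hw; apply: (@halted_H _ _ true); rewrite step_state.
  rewrite step_rootC; have [H1 _] := liftA (Hc' _ Ht0); exact: hw_mono H1.
rewrite halted_nacc; last by apply: (@halted_H _ _ true); rewrite step_state.
rewrite inE (np_S _ c) Ht /= add1n; congr S.
rewrite big_imset; last by move=> x y _ _; apply: liftT_inj.
apply: eq_bigr => t Ht0; rewrite step_rootC.
have [H1 H2] := liftA (Hc' _ Ht0).
by rewrite -nacc_S (nacc_stable (leqnSn n) H1) H2.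
Qed.

Lemma rootB M n (c : config M) : c.1.1 = start M -> halts_within n c ->
  halts_within n.+1 (rootC true c) /\ 0 < npaths n.+1 (rootC true c) /\
  exists m, npaths n.+1 (rootC true c) + naccpaths n c = (2 * m).+1.
Proof.
move=> Hs Hc; have ER := @trans_root M true c Hs.
case Ht: (halted c).
  rewrite Ht in ER.
  case Ha: (c.1.1 \in accepting M).
    have {}ER : trans (rootC true c) = hpair (head_sym c) by rewrite ER Ha.
    have Ht': halted (rootC true c) = false.
      by rewrite /halted ER; apply/negbTE/set0Pn; exists (h1 (head_sym c)); rewrite !inE eqxx.
    rewrite hw_S np_S Ht' ER halted_nacc // Ha.
    rewrite (eq_bigr (fun _ => 1)) ?sum1_card ?hpair_card //; last first.
      by move=> t Ht0; rewrite halted_np //; exact: hpair_halts Ht0.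
    split; last by split => //; exists 1.
    apply/forall_inP => t Ht0; apply: halted_hw; exact: hpair_halts Ht0.
  have {}ER : trans (rootC true c) = set0 by rewrite ER Ha.
  have Ht': halted (rootC true c) by rewrite /halted ER.
  rewrite halted_hw // halted_np // halted_nacc // Ha.
  by split => //; split => //; exists 0.
case: n Hc => [|n] Hc; first by move: Hc => /=; rewrite Ht.
move: (Hc); rewrite hw_S Ht => /forall_inP Hc'.
rewrite Ht in ER.
have Ht' : halted (rootC true c) = false.
  by rewrite /halted ER; apply/negbTE/set0Pn; exists (h1 (head_sym c)); rewrite setU11.
rewrite hw_S np_S Ht' ER big_setU1 ?h1_notin //; split.
  apply/forall_inP => t /setU1P [-> | /imsetP [t0 Ht0 ->]].
    by apply: halted_hw; apply: (@halted_H _ _ true); rewrite step_state.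
  by rewrite step_rootC; have [H1 _] := liftB (Hc' _ Ht0).
rewrite halted_np; last by apply: (@halted_H _ _ true); rewrite step_state.
split; first by [].
exists (npaths n.+1 c).
rewrite (nacc_S _ c) (np_S _ c) Ht big_imset; last by move=> x y _ _; apply: liftT_inj.
rewrite (eq_bigr (fun t => npaths n.+1 (liftC true (step c t)))); last by move=> t _; rewrite step_rootC.
rewrite -[X in X = _]/(1 + \sum_(t in trans c) npaths n.+1 (liftC true (step c t)) + \sum_(t in trans c) naccpaths n (step c t)).
rewrite -addnA -big_split big_distrr add1n; congr S.
apply: eq_bigr => t Ht0.
by have [H1 H2] := liftB (Hc' _ Ht0).
Qed.

Lemma tb_le k n : (time_bound k n).+1 <= time_bound k.+2 n.
Proof.
rewrite /time_bound; case: n => [|n].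
  by case: k => [|k] //; rewrite !exp0n.
rewrite -addSnnS; apply: leq_add; last by [].
exact: (leq_pexp2l (ltn0Sn n) (leq_trans (leqnSn k) (leqnSn k.+1))).
Qed.

Theorem proposition8 : forall L : seq bool -> Prop, ParityTotP L <-> ParityP L.
Proof.
move=> L; split.
  case=> f [[M [k [HM Hf]]] HL].
  exists (acc_M (ext M false) k.+2); split.
    exists (ext M false), k.+2; split => // x.
    have [H1 _] := rootA (n := time_bound k (size x)) (c := init M x) erefl (HM x).
    change (halts_within (time_bound k.+2 (size x)) (rootC false (init M x))).
    exact: hw_mono (tb_le k _) H1.
  move=> x; apply: (iff_trans (HL x)); rewrite Hf /acc_M /tot_M.
  have [H1 H2] := rootA (n := time_bound k (size x)) (c := init M x) erefl (HM x).
  change (odd (npaths (time_bound k (size x)) (init M x) - 1) <->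
          odd (naccpaths (time_bound k.+2 (size x)) (rootC false (init M x)))).
  rewrite (nacc_stable (tb_le k _) H1) H2.
  have := np_pos (HM x); case: npaths => //= p _.
  by rewrite subn1 /= negbK.
case=> f [[M [k [HM Hf]]] HL].
exists (tot_M (ext M true) k.+2); split.
  exists (ext M true), k.+2; split => // x.
  have [H1 _] := rootB (n := time_bound k (size x)) (c := init M x) erefl (HM x).
  change (halts_within (time_bound k.+2 (size x)) (rootC true (init M x))).
  exact: hw_mono (tb_le k _) H1.
move=> x; apply: (iff_trans (HL x)); rewrite Hf /acc_M /tot_M.
have [H1 [H2 [m H3]]] := rootB (n := time_bound k (size x)) (c := init M x) erefl (HM x).
change (odd (naccpaths (time_bound k (size x)) (init M x)) <->
        odd (npaths (time_bound k.+2 (size x)) (rootC true (init M x)) - 1)).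
rewrite (np_stable (tb_le k _) H1).
move: H2 H3; case: npaths => //= q _ [] H3.
have : odd (q + naccpaths (time_bound k (size x)) (init M x)) = false.
  by rewrite H3 mul2n odd_double.
rewrite subn1 /= oddD.
by case: (odd q); case: odd.
Qed.
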